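(* Let $H=l_2$ be the real separable infinite-dimensional Hilbert space with zero $\theta$. Let $d\in H$ with $\|d\|=1$ and let $\gamma\in[0,\pi]$ with $\gamma\leqslant\arccos\frac14$. Then $C(-\tfrac12 d,\tfrac12 d,\gamma)\subset\overline{B}(\theta,1)$.
   Context: $\overline{B}(\theta,1)=\{x\in H:\|x\|\leqslant1\}$. For $x,y\in H$, $\angle(x,y)=\arccos\frac{\langle x,y\rangle}{\|x\|\,\|y\|}\in[0,\pi]$, with $\angle(x,y)=0$ if $x=\theta$ or $y=\theta$. For $s\ne e$ and $\gamma\in[0,\pi]$, the ommatidium is $C(s,e,\gamma)=\{x\in H:\ \|x-s\|\leqslant\|e-s\|\text{ and }\angle(x-s,e-s)\leqslant\gamma\}$. *)

(* Defs.v *)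
From Stdlib Require Import Reals Lra ClassicalEpsilon.
From Coquelicot Require Import Coquelicot.
Open Scope R_scope.

(* H = l_2: real square-summable sequences; vectors are raw sequences nat -> R,
   membership in H is the predicate is_l2. *)
Definition is_l2 (x : nat -> R) : Prop := ex_series (fun n => x n ^ 2).

Definition theta : nat -> R := fun _ => 0.
Definition vadd (x y : nat -> R) : nat -> R := fun n => x n + y n.
Definition vsub (x y : nat -> R) : nat -> R := fun n => x n - y n.
Definition vscal (a : R) (x : nat -> R) : nat -> R := fun n => a * x n.

Definition inner (x y : nat -> R) : R := Series (fun n => x n * y n).
Definition l2norm (x : nat -> R) : R := sqrt (inner x x).

Definition angle (x y : nat -> R) : R :=
  if excluded_middle_informative (x = theta \/ y = theta) then 0
  else acos (inner x y / (l2norm x * l2norm y)).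

Definition ommatidium (s e : nat -> R) (g : R) (x : nat -> R) : Prop :=
  is_l2 x /\ l2norm (vsub x s) <= l2norm (vsub e s)
  /\ angle (vsub x s) (vsub e s) <= g.

Definition closed_ball (c : nat -> R) (r : R) (x : nat -> R) : Prop :=
  is_l2 x /\ l2norm (vsub x c) <= r.

(* Main.v *)
Require Import Defs.
From Stdlib Require Import Reals Lra ClassicalEpsilon.
From Coquelicot Require Import Coquelicot.
Open Scope R_scope.

Lemma ex_prod (a b : nat -> R) : is_l2 a -> is_l2 b -> ex_series (fun n => a n * b n).
Proof.
  intros Ha Hb.
  apply (@ex_series_le R_AbsRing R_CompleteNormedModule _ (fun n => / 2 * (a n ^ 2 + b n ^ 2))).
  - intros n. change (norm (a n * b n)) with (Rabs (a n * b n)).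
    destruct (Rle_dec 0 (a n * b n)).
    + rewrite Rabs_right by lra. pose proof (pow2_ge_0 (a n - b n)). nra.
    + rewrite Rabs_left by lra. pose proof (pow2_ge_0 (a n + b n)). nra.
  - exact (ex_series_scal_l (/2) _ (ex_series_plus _ _ Ha Hb)).
Qed.

Lemma sum2 (a b : nat -> R) : ex_series a -> ex_series b ->
  Series (fun n => a n + b n) = Series a + Series b.
Proof. apply Series_plus. Qed.

Lemma ex_sum2 (a b : nat -> R) : ex_series a -> ex_series b ->
  ex_series (fun n => a n + b n).
Proof. intros. exact (ex_series_plus _ _ H H0). Qed.

Lemma ex_scal (c : R) (a : nat -> R) : ex_series a -> ex_series (fun n => c * a n).
Proof. intros. exact (ex_series_scal_l c _ H). Qed.

Lemma acos_ge (a : R) : acos a <= acos (1/4) -> 1/4 <= a.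
Proof.
  intros H.
  destruct (Rle_dec a (-1)) as [h|h].
  - unfold acos at 1 in H. destruct (Rle_dec a (-1)); [|contradiction].
    pose proof (acos_bound_lt (1/4)). lra.
  - destruct (Rle_dec 1 a) as [h'|h']; [lra|].
    destruct (Rle_dec (1/4) a) as [k|k]; [exact k|].
    exfalso.
    pose proof (acos_bound a). pose proof (acos_bound (1/4)).
    destruct (Req_dec (acos a) (acos (1/4))) as [e|e].
    + assert (cos (acos a) = cos (acos (1/4))) by (rewrite e; reflexivity).
      rewrite !cos_acos in H2 by lra. lra.
    + assert (cos (acos (1/4)) < cos (acos a)) by (apply cos_decreasing_1; lra).
      rewrite !cos_acos in H2 by lra. lra.
Qed.

Lemma sqrt_eq1 (D : R) : sqrt D = 1 -> D = 1.
Proof.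
  intros H. destruct (Rle_dec D 0).
  - rewrite sqrt_neg_0 in H by lra. lra.
  - rewrite <- (sqrt_sqrt D) by lra. rewrite H. ring.
Qed.

Theorem lemma12 (d : nat -> R) (g : R) :
  is_l2 d -> l2norm d = 1 ->
  0 <= g <= PI -> g <= acos (1 / 4) ->
  forall x : nat -> R,
    ommatidium (vscal (- (1 / 2)) d) (vscal (1 / 2) d) g x ->
    closed_ball theta 1 x.
Proof.
  intros Hd Hn1 Hg Hga x [Hx [Hnorm Hang]].
  split; [exact Hx|].
  unfold l2norm, inner in *.
  set (X := Series (fun n => x n * x n)).
  set (P := Series (fun n => x n * d n)).
  set (D := Series (fun n => d n * d n)).
  assert (eX := ex_prod x x Hx Hx).
  assert (eP := ex_prod x d Hx Hd).
  assert (eD := ex_prod d d Hd Hd).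
  assert (HD : D = 1) by (apply sqrt_eq1; exact Hn1).
  assert (HXt : Series (fun n => vsub x theta n * vsub x theta n) = X).
  { apply Series_ext. intros n. unfold vsub, theta; cbv beta; ring. }
  rewrite HXt.
  assert (Hdd : forall n, vsub (vscal (1/2) d) (vscal (-(1/2)) d) n = d n).
  { intros n. unfold vsub, vscal; cbv beta. lra. }
  assert (HD' : Series (fun n => vsub (vscal (1/2) d) (vscal (-(1/2)) d) n *
                 vsub (vscal (1/2) d) (vscal (-(1/2)) d) n) = D).
  { apply Series_ext. intros n. rewrite Hdd. reflexivity. }
  set (Y := Series (fun n => vsub x (vscal (-(1/2)) d) n * vsub x (vscal (-(1/2)) d) n)).
  set (Q := Series (fun n => vsub x (vscal (-(1/2)) d) n * vsub (vscal (1/2) d) (vscal (-(1/2)) d) n)).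
  assert (HY : Y = X + P + /4 * D).
  { unfold Y. rewrite (Series_ext _ (fun n => (x n * x n + x n * d n) + /4 * (d n * d n))).
    2:{ intros n. unfold vsub, vscal; cbv beta; field. }
    rewrite sum2; [| apply ex_sum2; assumption | apply ex_scal; assumption].
    rewrite sum2 by assumption. rewrite Series_scal_l. reflexivity. }
  assert (HQ : Q = P + /2 * D).
  { unfold Q. rewrite (Series_ext _ (fun n => x n * d n + /2 * (d n * d n))).
    2:{ intros n. rewrite Hdd. unfold vsub, vscal; cbv beta; field. }
    rewrite sum2; [| assumption | apply ex_scal; assumption].
    rewrite Series_scal_l. reflexivity. }
  rewrite HD' in Hnorm. rewrite HD, sqrt_1 in Hnorm.
  fold Y in Hnorm.
  assert (X <= 1).
  { unfold angle in Hang.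
    destruct (excluded_middle_informative _) as [[Ht|Ht]|Ht].
    - assert (Y = 0).
      { unfold Y. rewrite Ht. unfold theta.
        rewrite (Series_ext _ (fun n => 0 * (d n * d n))) by (intros; ring).
        rewrite Series_scal_l. ring. }
      assert (Q = 0).
      { unfold Q. rewrite Ht. unfold theta.
        rewrite (Series_ext _ (fun n => 0 * (d n * d n))) by (intros; ring).
        rewrite Series_scal_l. ring. }
      lra.
    - exfalso. rewrite Ht in HD'. unfold theta in HD'.
      rewrite (Series_ext _ (fun n => 0 * (d n * d n))) in HD' by (intros; ring).
      rewrite Series_scal_l in HD'. lra.
    - unfold l2norm, inner in Hang. fold Y Q in Hang. rewrite HD', HD, sqrt_1 in Hang.
      assert (Ha := acos_ge _ (Rle_trans _ _ _ Hang Hga)).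
      rewrite Rmult_1_r in Ha.
      destruct (Rle_dec Y 0) as [hy|hy].
      + rewrite sqrt_neg_0 in Ha by lra. unfold Rdiv in Ha. rewrite Rinv_0 in Ha. lra.
      + assert (Hs : 0 < sqrt Y) by (apply sqrt_lt_R0; lra).
        assert (HYs : Y = sqrt Y * sqrt Y) by (rewrite sqrt_sqrt; lra).
        assert (sqrt Y / 4 <= Q).
        { apply (Rmult_le_compat_r (sqrt Y)) in Ha; [|lra].
          assert (Q / sqrt Y * sqrt Y = Q) by (field; lra). lra. }
        nra. }
  rewrite <- sqrt_1. apply sqrt_le_1_alt. exact H.
Qed.
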